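(* In the setting below, let $(\tilde\theta,\omega_1,\omega_2,\omega_3)$ be a type I natural SU(2)-structure on $\mathcal S$ with coefficients $b_0,b_1,b_2,c_0,c_1,c_2$, and let $\Phi_2$ be the endomorphism of $\ker\theta$ determined by $\omega_2(x,\Phi_2y)=g_{SU(2)}(x,y)$ for all $x,y\in\ker\theta$. Then $\Phi_2(V_0)\subset V_0$ if and only if $c_2=0$, and $\Phi_2(H_0)\subset H_0$ if and only if $c_0=0$. Consequently $\Phi_2$ preserves both $H_0$ and $V_0$ if and only if there exist $b_2\ne0$ and $\varepsilon\in\{1,-1\}$ with $\varepsilon b_2>0$ such that $\omega_2=b_2\alpha_2-\frac1{b_2}\alpha_0$ and $\omega_3=\varepsilon\alpha_1$.
   Context: Let $(M,g)$ be an oriented Riemannian 3-manifold, $s>0$, $\mathcal S=\{u\in TM:\|u\|=s\}$ the total space of the radius-$s$ tangent sphere bundle with the canonical (Sasaki-induced) metric. An adapted frame at $u\in\mathcal S$: take a positively oriented orthonormal frame $(f_0=u/s,f_1,f_2)$ of $T_{\pi(u)}M$ and set $e_0=f_0^h,e_1=f_1^h,e_2=f_2^h,e_3=f_1^v,e_4=f_2^v$ (horizontal and vertical lifts); dual coframe $e^0,\dots,e^4$, $e^{ij}=e^i\wedge e^j$. Globally defined: $\theta=s\,e^0$, $\alpha_0=e^{12}$, $\alpha_1=e^{14}-e^{23}$, $\alpha_2=e^{34}$, $d\theta=e^{31}+e^{42}$; $H_0=\mathrm{span}\{e_1,e_2\}$, $V_0=\mathrm{span}\{e_3,e_4\}$,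 $\ker\theta=H_0\oplus V_0$. An SU(2)-structure: $(\tilde\theta,\omega_1,\omega_2,\omega_3)$ with (C1) $\tilde\theta\wedge\omega_1\wedge\omega_1\neq0$, $\omega_i\wedge\omega_j=0$ ($i\ne j$), $\omega_1\wedge\omega_1=\omega_2\wedge\omega_2=\omega_3\wedge\omega_3=2v$, $v$ nowhere zero; (C2) $x\lrcorner\omega_1=y\lrcorner\omega_2\Rightarrow\omega_3(x,y)\ge0$. Metric on $\ker\tilde\theta$: $g_{SU(2)}$ defined by $x\lrcorner\omega_1\wedge y\lrcorner\omega_2\wedge\omega_3=g_{SU(2)}(x,y)\,v$. Type I natural SU(2)-structure: an SU(2)-structure with $\tilde\theta=-2\theta$, $\omega_1=d\theta$, $\omega_2=b_0\alpha_0+b_1\alpha_1+b_2\alpha_2$, $\omega_3=c_0\alpha_0+c_1\alpha_1+c_2\alpha_2$, real constants (equivalently $b_1^2-b_0b_2=c_1^2-c_0c_2=1$, $b_0c_2+b_2c_0-2b_1c_1=0$, $b_1c_0-b_0c_1>0$). *)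

(* Defs.v *)
(* Pointwise linear algebra on ker(theta) = span{e1,e2,e3,e4}
   at a point u of S, in an adapted frame.  Indices: e1,e2,e3,e4 |-> 0,1,2,3. *)
From HB Require Import structures.
From mathcomp Require Import all_boot all_order all_algebra.
Set Implicit Arguments. Unset Strict Implicit. Unset Printing Implicit Defensive.
Import Order.TTheory GRing.Theory Num.Theory.
Local Open Scope ring_scope.

Section Forms.
Variable R : realFieldType.

(* tangent vectors in ker theta: row vectors of coordinates w.r.t. (e1,e2,e3,e4) *)
Definition vec := 'rV[R]_4.
(* 1-forms on ker theta: row vectors of coefficients w.r.t. (e^1,..,e^4) *)
(* 2-forms on ker theta: skew matrices A, A i j = coefficient of e^{ij} for i<j,
   omega(x,y) = x A y^T *)
Definition form2 := 'M[R]_4.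

Definition i0 : 'I_4 := @Ordinal 4 0 isT.
Definition i1 : 'I_4 := @Ordinal 4 1 isT.
Definition i2 : 'I_4 := @Ordinal 4 2 isT.
Definition i3 : 'I_4 := @Ordinal 4 3 isT.

Definition eij (i j : 'I_4) : form2 := delta_mx i j - delta_mx j i.

Definition ev2 (w : form2) (x y : vec) : R := (x *m w *m y^T) 0 0.

Definition contr (x : vec) (w : form2) : 'rV[R]_4 := x *m w.

Definition wedge11 (a b : 'rV[R]_4) : form2 :=
  \matrix_(i, j) (a 0 i * b 0 j - a 0 j * b 0 i).

(* coefficient of e^{1234} in  A /\ B  for 2-forms A, B *)
Definition wedge22 (A B : form2) : R :=
  A i0 i1 * B i2 i3 - A i0 i2 * B i1 i3 + A i0 i3 * B i1 i2
  + A i1 i2 * B i0 i3 - A i1 i3 * B i0 i2 + A i2 i3 * B i0 i1.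

(* the globally defined forms, restricted to ker theta *)
Definition alpha0 : form2 := eij i0 i1.
Definition alpha1 : form2 := eij i0 i3 - eij i1 i2.
Definition alpha2 : form2 := eij i2 i3.
Definition dtheta : form2 := eij i2 i0 + eij i3 i1.

(* v (coefficient of e^{1234}) determined by omega1 /\ omega1 = 2 v *)
Definition vol (w1 : form2) : R := wedge22 w1 w1 / 2.

(* SU(2)-structure conditions (C1), (C2); theta~ = -2 theta = -2 s e^0 with
   s > 0 and the omega_i have no e^0 component, so theta~/\w1/\w1 <> 0 and
   "v nowhere zero" both amount to vol w1 <> 0. *)
Definition su2_structure (w1 w2 w3 : form2) : Prop :=
  [/\ vol w1 != 0,
      wedge22 w1 w2 = 0 /\ wedge22 w1 w3 = 0 /\ wedge22 w2 w3 = 0,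
      wedge22 w2 w2 = 2 * vol w1 /\ wedge22 w3 w3 = 2 * vol w1
    & forall x y : vec, contr x w1 = contr y w2 -> 0 <= ev2 w3 x y].

(* g_SU(2)(x,y): x_|w1 /\ y_|w2 /\ w3 = g(x,y) v *)
Definition gSU2 (w1 w2 w3 : form2) (x y : vec) : R :=
  wedge22 (wedge11 (contr x w1) (contr y w2)) w3 / vol w1.

Definition omega_of (a0 a1 a2 : R) : form2 :=
  a0 *: alpha0 + a1 *: alpha1 + a2 *: alpha2.

Definition type_I (b0 b1 b2 c0 c1 c2 : R) : Prop :=
  su2_structure dtheta (omega_of b0 b1 b2) (omega_of c0 c1 c2).

Definition inH0 (x : vec) : Prop := x 0 i2 = 0 /\ x 0 i3 = 0.
Definition inV0 (x : vec) : Prop := x 0 i0 = 0 /\ x 0 i1 = 0.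

(* endomorphism Phi of ker theta, given by the matrix P: Phi y = y *m P *)
Definition preserves (P : 'M[R]_4) (S : vec -> Prop) : Prop :=
  forall y, S y -> S (y *m P).

End Forms.

(* Main.v *)
Require Import Defs.
From HB Require Import structures.
From mathcomp Require Import all_boot all_order all_algebra ring lra.
Import Order.TTheory GRing.Theory Num.Theory.
Local Open Scope ring_scope.

Lemma sum4 (R : realFieldType) (f : 'I_4 -> R) : \sum_k f k = f (i0) + f i1 + f i2 + f i3.
Proof. by rewrite !big_ord_recr big_ord0 /= add0r; congr (_+_+_+_); apply: congr1; apply: val_inj. Qed.

Lemma volE (R : realFieldType) : vol (dtheta R) = -1.
Proof. rewrite /vol /wedge22 /dtheta /eij !mxE /=. 
have h2 : (2:R) != 0 by rewrite pnatr_eq0.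
apply: (mulIf h2). rewrite mulfVK //. ring. Qed.

Lemma evd (R : realFieldType) (W P : 'M[R]_4) i j :
  ev2 W (delta_mx 0 i) (delta_mx 0 j *m P) = \sum_k W i k * P j k.
Proof.
rewrite /ev2 -!rowE mxE; apply: eq_bigr => k _; by rewrite !mxE.
Qed.

Lemma gd (R : realFieldType) (W1 W2 W3 : 'M[R]_4) i j :
  gSU2 W1 W2 W3 (delta_mx 0 i) (delta_mx 0 j) =
  wedge22 (wedge11 (row i W1) (row j W2)) W3 / vol W1.
Proof. by rewrite /gSU2 /contr -!rowE. Qed.

Section Ent.
Variable R : realFieldType.
Definition omT (a0 a1 a2 : R) (a b : 'I_4) : R :=
  match val a, val b with
  | 0,1 => a0 | 1,0 => -a0 | 0,3 => a1 | 3,0 => -a1 | 1,2 => -a1 | 2,1 => a1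
  | 2,3 => a2 | 3,2 => -a2 | _,_ => 0 end.
Definition dtT (a b : 'I_4) : R :=
  match val a, val b with
  | 2,0 => 1 | 0,2 => -1 | 3,1 => 1 | 1,3 => -1 | _,_ => 0 end.
Lemma omE a0 a1 a2 (a b : 'I_4) : omega_of a0 a1 a2 a b = omT a0 a1 a2 a b.
Proof.
rewrite /omega_of /alpha0 /alpha1 /alpha2 /eij !mxE.
case: a => [[|[|[|[|?]]]] ha] //; case: b => [[|[|[|[|?]]]] hb] //=; rewrite /omT /=; ring.
Qed.
Lemma dthE (a b : 'I_4) : dtheta R a b = dtT a b.
Proof.
rewrite /dtheta /eij !mxE.
case: a => [[|[|[|[|?]]]] ha] //; case: b => [[|[|[|[|?]]]] hb] //=; rewrite /dtT /=; ring.
Qed.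
Lemma rowE' (i : 'I_4) (A : 'M[R]_4) k : row i A 0 k = A i k.
Proof. by rewrite mxE. Qed.
Lemma w11E (a b : 'rV[R]_4) p q : wedge11 a b p q = a 0 p * b 0 q - a 0 q * b 0 p.
Proof. by rewrite mxE. Qed.
End Ent.

Ltac eqtac HP i j :=
  have := HP (delta_mx 0 i) (delta_mx 0 j);
  rewrite evd gd volE invrN1 sum4 /wedge22 !w11E !rowE' !omE !dthE /omT /dtT /=;
  let h := fresh in move=> h;
  apply/eqP; rewrite -subr_eq0; apply/eqP;
  match type of h with ?a = ?b => transitivity (a - b); [ring | rewrite h; ring] end.

Section S.
Variables (R : realFieldType) (b0 b1 b2 c0 c1 c2 : R) (P : 'M[R]_4).
Hypothesis HP : forall x y : vec R,
     ev2 (omega_of b0 b1 b2) x (y *m P)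
     = gSU2 (dtheta R) (omega_of b0 b1 b2) (omega_of c0 c1 c2) x y.
Hypothesis hb : b1*b1 - b0*b2 - 1 = 0.
Hypothesis hbc : b0*c2 + b2*c0 - 2*b1*c1 = 0.

Lemma e00 : b0 * P i0 i1 + b1 * P i0 i3 = b1 * c0 - b0 * c1.
Proof. eqtac HP i0 i0. Qed.

Lemma e01 : b0 * P i1 i1 + b1 * P i1 i3 = 0.
Proof. eqtac HP i0 i1. Qed.

Lemma e02 : b0 * P i2 i1 + b1 * P i2 i3 = b2 * c0 - b1 * c1.
Proof. eqtac HP i0 i2. Qed.

Lemma e03 : b0 * P i3 i1 + b1 * P i3 i3 = 0.
Proof. eqtac HP i0 i3. Qed.

Lemma e10 : - (b0 * P i0 i0) - b1 * P i0 i2 = 0.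
Proof. eqtac HP i1 i0. Qed.

Lemma e11 : - (b0 * P i1 i0) - b1 * P i1 i2 = b1 * c0 - b0 * c1.
Proof. eqtac HP i1 i1. Qed.

Lemma e12 : - (b0 * P i2 i0) - b1 * P i2 i2 = 0.
Proof. eqtac HP i1 i2. Qed.

Lemma e13 : - (b0 * P i3 i0) - b1 * P i3 i2 = b2 * c0 - b1 * c1.
Proof. eqtac HP i1 i3. Qed.

Lemma e20 : b1 * P i0 i1 + b2 * P i0 i3 = b1 * c1 - b0 * c2.
Proof. eqtac HP i2 i0. Qed.

Lemma e21 : b1 * P i1 i1 + b2 * P i1 i3 = 0.
Proof. eqtac HP i2 i1. Qed.

Lemma e22 : b1 * P i2 i1 + b2 * P i2 i3 = b2 * c1 - b1 * c2.
Proof. eqtac HP i2 i2. Qed.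

Lemma e23 : b1 * P i3 i1 + b2 * P i3 i3 = 0.
Proof. eqtac HP i2 i3. Qed.

Lemma e30 : - (b1 * P i0 i0) - b2 * P i0 i2 = 0.
Proof. eqtac HP i3 i0. Qed.

Lemma e31 : - (b1 * P i1 i0) - b2 * P i1 i2 = b1 * c1 - b0 * c2.
Proof. eqtac HP i3 i1. Qed.

Lemma e32 : - (b1 * P i2 i0) - b2 * P i2 i2 = 0.
Proof. eqtac HP i3 i2. Qed.

Lemma e33 : - (b1 * P i3 i0) - b2 * P i3 i2 = b2 * c1 - b1 * c2.
Proof. eqtac HP i3 i3. Qed.

Lemma Pv1 : P i2 i0 = 0.
Proof.
apply/eqP; rewrite -subr_eq0; apply/eqP.
transitivity (b2 * (- (b0 * P i2 i0) - b1 * P i2 i2 - (0)) - b1 * (- (b1 * P i2 i0) - b2 * P i2 i2 - (0)) - (b1*b1 - b0*b2 - 1) * P i2 i0); first ring.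
by rewrite !(e00,e01,e02,e03,e10,e11,e12,e13,e20,e21,e22,e23,e30,e31,e32,e33) ?hb ?hbc; ring.
Qed.

Lemma Pv2 : P i2 i1 = - c2.
Proof.
apply/eqP; rewrite -subr_eq0; apply/eqP.
transitivity (b1 * (b1 * P i2 i1 + b2 * P i2 i3 - (b2 * c1 - b1 * c2)) - b2 * (b0 * P i2 i1 + b1 * P i2 i3 - (b2 * c0 - b1 * c1)) - P i2 i1 * (b1*b1 - b0*b2 - 1) - b2 * (b0*c2 + b2*c0 - 2*b1*c1) - c2 * (b1*b1 - b0*b2 - 1)); first ring.
by rewrite !(e00,e01,e02,e03,e10,e11,e12,e13,e20,e21,e22,e23,e30,e31,e32,e33) ?hb ?hbc; ring.
Qed.

Lemma Pv3 : P i3 i0 = c2.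
Proof.
apply/eqP; rewrite -subr_eq0; apply/eqP.
transitivity (b2 * (- (b0 * P i3 i0) - b1 * P i3 i2 - (b2 * c0 - b1 * c1)) - b1 * (- (b1 * P i3 i0) - b2 * P i3 i2 - (b2 * c1 - b1 * c2)) - (b1*b1 - b0*b2 - 1) * P i3 i0 + b2 * (b0*c2 + b2*c0 - 2*b1*c1) + c2 * (b1*b1 - b0*b2 - 1)); first ring.
by rewrite !(e00,e01,e02,e03,e10,e11,e12,e13,e20,e21,e22,e23,e30,e31,e32,e33) ?hb ?hbc; ring.
Qed.

Lemma Pv4 : P i3 i1 = 0.
Proof.
apply/eqP; rewrite -subr_eq0; apply/eqP.
transitivity (b1 * (b1 * P i3 i1 + b2 * P i3 i3 - (0)) - b2 * (b0 * P i3 i1 + b1 * P i3 i3 - (0)) - (b1*b1 - b0*b2 - 1) * P i3 i1); first ring.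
by rewrite !(e00,e01,e02,e03,e10,e11,e12,e13,e20,e21,e22,e23,e30,e31,e32,e33) ?hb ?hbc; ring.
Qed.

Lemma Pv5 : P i0 i2 = 0.
Proof.
apply/eqP; rewrite -subr_eq0; apply/eqP.
transitivity (b0 * (- (b1 * P i0 i0) - b2 * P i0 i2 - (0)) - b1 * (- (b0 * P i0 i0) - b1 * P i0 i2 - (0)) - (b1*b1 - b0*b2 - 1) * P i0 i2); first ring.
by rewrite !(e00,e01,e02,e03,e10,e11,e12,e13,e20,e21,e22,e23,e30,e31,e32,e33) ?hb ?hbc; ring.
Qed.

Lemma Pv6 : P i0 i3 = c0.
Proof.
apply/eqP; rewrite -subr_eq0; apply/eqP.
transitivity (b1 * (b0 * P i0 i1 + b1 * P i0 i3 - (b1 * c0 - b0 * c1)) - b0 * (b1 * P i0 i1 + b2 * P i0 i3 - (b1 * c1 - b0 * c2)) - (b1*b1 - b0*b2 - 1) * P i0 i3 + c0 * (b1*b1 - b0*b2 - 1) + b0 * (b0*c2 + b2*c0 - 2*b1*c1)); first ring.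
by rewrite !(e00,e01,e02,e03,e10,e11,e12,e13,e20,e21,e22,e23,e30,e31,e32,e33) ?hb ?hbc; ring.
Qed.

Lemma Pv7 : P i1 i2 = - c0.
Proof.
apply/eqP; rewrite -subr_eq0; apply/eqP.
transitivity (b0 * (- (b1 * P i1 i0) - b2 * P i1 i2 - (b1 * c1 - b0 * c2)) - b1 * (- (b0 * P i1 i0) - b1 * P i1 i2 - (b1 * c0 - b0 * c1)) - (b1*b1 - b0*b2 - 1) * P i1 i2 - c0 * (b1*b1 - b0*b2 - 1) - b0 * (b0*c2 + b2*c0 - 2*b1*c1)); first ring.
by rewrite !(e00,e01,e02,e03,e10,e11,e12,e13,e20,e21,e22,e23,e30,e31,e32,e33) ?hb ?hbc; ring.
Qed.

Lemma Pv8 : P i1 i3 = 0.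
Proof.
apply/eqP; rewrite -subr_eq0; apply/eqP.
transitivity (b1 * (b0 * P i1 i1 + b1 * P i1 i3 - (0)) - b0 * (b1 * P i1 i1 + b2 * P i1 i3 - (0)) - (b1*b1 - b0*b2 - 1) * P i1 i3); first ring.
by rewrite !(e00,e01,e02,e03,e10,e11,e12,e13,e20,e21,e22,e23,e30,e31,e32,e33) ?hb ?hbc; ring.
Qed.

End S.

Lemma ev2E (R : realFieldType) (W : 'M[R]_4) x y :
  ev2 W x y = \sum_i (\sum_k x 0 k * W k i) * y 0 i.
Proof. rewrite /ev2 mxE; apply: eq_bigr => i _; by rewrite !mxE. Qed.
Lemma mulE (R : realFieldType) (W : 'M[R]_4) (x : 'rV[R]_4) j :
  (x *m W) 0 j = \sum_k x 0 k * W k j.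
Proof. by rewrite mxE. Qed.
Lemma deltaE (R : realFieldType) (i k : 'I_4) : (delta_mx 0 i : 'rV[R]_4) 0 k = (k == i)%:R.
Proof. by rewrite mxE eqxx. Qed.

Lemma cstr (R : realFieldType) (b0 b1 b2 c0 c1 c2 : R) :
  type_I b0 b1 b2 c0 c1 c2 ->
  [/\ b1*b1 - b0*b2 - 1 = 0, c1*c1 - c0*c2 - 1 = 0,
      b0*c2 + b2*c0 - 2*b1*c1 = 0 & 0 <= b1*c0 - b0*c1].
Proof.
case=> _ [_ [_ h23]] [h22 h33] hC.
have h2 : (2:R) != 0 by rewrite pnatr_eq0.
rewrite volE /wedge22 !omE /omT /= in h22 h33 h23.
split.
- apply: (mulIf h2); rewrite mul0r.
  match type of h22 with ?a = ?b => transitivity (b - a); [ring | by rewrite h22 subrr] end.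
- apply: (mulIf h2); rewrite mul0r.
  match type of h33 with ?a = ?b => transitivity (b - a); [ring | by rewrite h33 subrr] end.
- rewrite -[RHS]h23; ring.
pose x : vec R := \row_(k < 4) (if val k == 1%N then - b1 else if val k == 3%N then b0 else 0).
have xE k : x 0 k = (if val k == 1%N then - b1 else if val k == 3%N then b0 else 0) by rewrite mxE.
have := hC x (delta_mx 0 i0).
have -> : ev2 (omega_of c0 c1 c2) x (delta_mx 0 i0) = b1 * c0 - b0 * c1.
  rewrite ev2E !sum4 !deltaE !xE !omE /omT /=. ring.
apply. apply/rowP => k. rewrite /contr !mulE !sum4 !deltaE !xE !dthE !omE /dtT /omT /=.
case: k => [[|[|[|[|?]]]] hk] //=; ring.
Qed.

Theorem mainTheorem14 (R : realFieldType) (b0 b1 b2 c0 c1 c2 : R)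
  (P : 'M[R]_4) :
  type_I b0 b1 b2 c0 c1 c2 ->
  (forall x y : vec R,
     ev2 (omega_of b0 b1 b2) x (y *m P)
     = gSU2 (dtheta R) (omega_of b0 b1 b2) (omega_of c0 c1 c2) x y) ->
  [/\ preserves P (@inV0 R) <-> c2 = 0,
      preserves P (@inH0 R) <-> c0 = 0
    & (preserves P (@inH0 R) /\ preserves P (@inV0 R)) <->
      (exists (b : R) (eps : R),
         [/\ b != 0, eps = 1 \/ eps = -1, 0 < eps * b,
             omega_of b0 b1 b2 = b *: alpha2 R - b^-1 *: alpha0 R
           & omega_of c0 c1 c2 = eps *: alpha1 R])].
Proof.
move=> hT HP.
have [hb hc hbc hor] := @cstr _ _ _ _ _ _ _ hT.
have p1 := @Pv1 _ _ _ _ _ _ _ _ HP hb.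
have p2 := @Pv2 _ _ _ _ _ _ _ _ HP hb hbc.
have p3 := @Pv3 _ _ _ _ _ _ _ _ HP hb hbc.
have p4 := @Pv4 _ _ _ _ _ _ _ _ HP hb.
have p5 := @Pv5 _ _ _ _ _ _ _ _ HP hb.
have p6 := @Pv6 _ _ _ _ _ _ _ _ HP hb hbc.
have p7 := @Pv7 _ _ _ _ _ _ _ _ HP hb hbc.
have p8 := @Pv8 _ _ _ _ _ _ _ _ HP hb.
have V0E : preserves P (@inV0 R) <-> c2 = 0.
  split.
  - move=> H; have [_ h1] := H (delta_mx 0 i2) (conj (deltaE _ _ _) (deltaE _ _ _)).
    move: h1; rewrite mulE sum4 !deltaE /= p2.
    move=> h; apply/eqP; rewrite -oppr_eq0; apply/eqP; rewrite -[RHS]h; ring.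
  - move=> z y [y0 y1]; split; rewrite mulE sum4 y0 y1.
      by rewrite p1 p3 z; ring.
    by rewrite p2 p4 z; ring.
have H0E : preserves P (@inH0 R) <-> c0 = 0.
  split.
  - move=> H; have [_ h1] := H (delta_mx 0 i0) (conj (deltaE _ _ _) (deltaE _ _ _)).
    move: h1; rewrite mulE sum4 !deltaE /= p6.
    move=> h; rewrite -[RHS]h; ring.
  - move=> z y [y2 y3]; split; rewrite mulE sum4 y2 y3.
      by rewrite p5 p7 z; ring.
    by rewrite p6 p8 z; ring.
split => //.
rewrite H0E V0E; split.
- move=> [z0 z2].
  rewrite z0 z2 in hc hbc hor.
  have c1sq : c1 * c1 = 1 by apply/eqP; rewrite -subr_eq0; apply/eqP; rewrite -[RHS]hc; ring.
  have c1n : c1 != 0 by apply/eqP => c1z; move: c1sq; rewrite c1z mul0r => /eqP; rewrite eq_sym oner_eq0.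
  have b1z : b1 = 0.
    apply/eqP; rewrite -(mulIr_eq0 _ (mulIf c1n)); apply/eqP.
    apply: (mulIf (x := -2)); first by rewrite oppr_eq0 pnatr_eq0.
    rewrite mul0r -[RHS]hbc; ring.
  rewrite b1z in hb hor.
  have hbb : b0 * b2 = -1 by apply/eqP; rewrite -subr_eq0 -oppr_eq0; apply/eqP; rewrite -[RHS]hb; ring.
  have b2n : b2 != 0 by apply/eqP => b2z; move: hbb; rewrite b2z mulr0 => /eqP; rewrite eq_sym oppr_eq0 oner_eq0.
  have b0E : b0 = - b2^-1 by apply: (mulIf b2n); rewrite hbb mulNr mulVf.
  exists b2, c1; split => //.
  + have : (c1 - 1) * (c1 + 1) = 0 by rewrite -[RHS]hc; ring.
    move/eqP; rewrite mulf_eq0 => /orP[/eqP h|/eqP h]; [left|right].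
      by apply/eqP; rewrite -subr_eq0; apply/eqP.
    by apply/eqP; rewrite -subr_eq0 opprK; apply/eqP.
  + have e : c1 * b2 = (- b0 * c1) * (b2 * b2).
      by rewrite b0E; field.
    have b0n : b0 != 0.
      by apply/eqP => b0z; move: hbb; rewrite b0z mul0r => /eqP; rewrite eq_sym oppr_eq0 oner_eq0.
    have q1 : 0 <= - b0 * c1 by rewrite (_ : - b0 * c1 = 0 * 0 - b0 * c1) //; ring.
    have q2 : - b0 * c1 != 0 by rewrite mulf_neq0 // oppr_eq0.
    have q3 : 0 <= b2 * b2 by rewrite -expr2 sqr_ge0.
    have q4 : b2 * b2 != 0 by rewrite mulf_neq0.
    rewrite e; apply: mulr_gt0; by rewrite lt_def ?q1 ?q2 ?q3 ?q4.
  + rewrite /omega_of b0E b1z scale0r addr0 scaleNr addrC.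
    by [].
  + by rewrite /omega_of z0 z2 !scale0r add0r addr0.
- move=> [b [eps [bn _ _ _ hc']]].
  have e01 := congr1 (fun M : 'M[R]_4 => M i0 i1) hc'.
  have e23 := congr1 (fun M : 'M[R]_4 => M i2 i3) hc'.
  rewrite /= omE /omT /= /alpha1 /eij !mxE /= in e01 e23.
  split; [move: e01 | move: e23] => h; match type of h with ?a = ?b => transitivity (a - b); [ring | by rewrite h subrr] end.
Qed.
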